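(* Assume the Standing Hypothesis (R). Then $G_v\cap L$ is not isomorphic to $\mathrm{C}_{q-\sqrt{3q}+1}:6$ nor to $\mathrm{C}_{q+\sqrt{3q}+1}:6$ (the maximal subgroups of $L$ that are semidirect products of a cyclic group of order $q\mp\sqrt{3q}+1$ by a cyclic group of order $6$).
   Context: Standing Hypothesis (R): $n\geq 1$, $q=3^{2n+1}$, $L={}^{2}\mathrm{G}_{2}(q)$ (the small Ree group), $G=L:m$ with $m$ a divisor of $2n+1$ (extension by field automorphisms, so $L\leq G\leq\mathrm{Aut}(L)=L:(2n+1)$). $\Gamma$ is a finite digraph with at least one arc, $G\leq\mathrm{Aut}(\Gamma)$ acts primitively on the vertices and transitively on the $s$-arcs of $\Gamma$ for some $s\geq 2$, and $v$ is a vertex with stabiliser $G_v$ (a maximal subgroup of $G$ not containing $L$). A digraph is a finite set with an anti-symmetric irreflexive relation $\to$; an $s$-arc is a sequence $v_0,\dots,v_s$ with $v_i\to v_{i+1}$. $\mathrm{C}_k$ is the cyclic group of order $k$. *)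

(* Defs.v *)
From HB Require Import structures.
From mathcomp Require Import all_boot all_order all_algebra all_fingroup all_solvable all_field.
Set Implicit Arguments. Unset Strict Implicit. Unset Printing Implicit Defensive.
Import GRing.Theory.

(* The small Ree group 2G2(q), q = 3^(2n+1), as a subgroup of GL_7(F_q).     *)
(* We use the 7-dimensional representation of the Chevalley group G2 with a  *)
(* Chevalley basis (basis v1..v7 of weights 2a+b, a+b, a, 0, -a, -a-b,      *)
(* -2a-b; a short simple root, b long simple root).  A root element is       *)
(*   x_r(t) = 1 + t e_r + t^2 (e_r^2/2)                                      *)
(* (e_r^3 = 0).  The Ree group is the subgroup generated by the elements     *)
(*   x_{+-S}(t) = x_{+-a}(t^th) x_{+-b}(t) x_{+-(a+b)}(-t^(th+1))            *)
(*                x_{+-(2a+b)}(t^(2th+1)),      th = 3^n,  t in F_q          *)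
(* (Carter, Simple groups of Lie type, 13.6), i.e. by the fixed points of    *)
(* the Steinberg endomorphism in the positive and negative unipotent         *)

Local Open Scope ring_scope.

(* a 7x7 matrix from a list of (row, column, integer entry) (0-indexed) *)
Definition mx_of_list (F : fieldType) (l : seq (nat * nat * int)) : 'M[F]_7 :=
  \matrix_(i < 7, j < 7)
     \sum_(e <- l | (e.1.1 == i :> nat) && (e.1.2 == j :> nat)) (e.2)%:~R.

(* root element x_r(t) given e_r and e_r^2/2 *)
Definition root_elt (F : fieldType) (e h : seq (nat * nat * int)) (t : F)
  : 'M[F]_7 :=
  1%:M + t *: mx_of_list F e + (t ^+ 2) *: mx_of_list F h.

(* e_r and e_r^2/2 for r = a, b, a+b, 2a+b (neg = false) and their negatives *)
Definition e_a (neg : bool) : seq (nat * nat * int) :=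
  if neg then [:: (1%N, 0%N, (1)%Z); (3%N, 2%N, (2)%Z); (4%N, 3%N, (1)%Z); (6%N, 5%N, (1)%Z)]
  else [:: (0%N, 1%N, (1)%Z); (2%N, 3%N, (1)%Z); (3%N, 4%N, (2)%Z); (5%N, 6%N, (1)%Z)].
Definition h_a (neg : bool) : seq (nat * nat * int) :=
  if neg then [:: (4%N, 2%N, (1)%Z)] else [:: (2%N, 4%N, (1)%Z)].
Definition e_b (neg : bool) : seq (nat * nat * int) :=
  if neg then [:: (2%N, 1%N, (1)%Z); (5%N, 4%N, (1)%Z)] else [:: (1%N, 2%N, (1)%Z); (4%N, 5%N, (1)%Z)].
Definition h_b (neg : bool) : seq (nat * nat * int) := [::].
Definition e_ab (neg : bool) : seq (nat * nat * int) :=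
  if neg then [:: (2%N, 0%N, (-1)%Z); (3%N, 1%N, (2)%Z); (5%N, 3%N, (-1)%Z); (6%N, 4%N, (1)%Z)]
  else [:: (0%N, 2%N, (1)%Z); (1%N, 3%N, (-1)%Z); (3%N, 5%N, (2)%Z); (4%N, 6%N, (-1)%Z)].
Definition h_ab (neg : bool) : seq (nat * nat * int) :=
  if neg then [:: (5%N, 1%N, (-1)%Z)] else [:: (1%N, 5%N, (-1)%Z)].
Definition e_2ab (neg : bool) : seq (nat * nat * int) :=
  if neg then [:: (3%N, 0%N, (-2)%Z); (4%N, 1%N, (1)%Z); (5%N, 2%N, (1)%Z); (6%N, 3%N, (-1)%Z)]
  else [:: (0%N, 3%N, (-1)%Z); (1%N, 4%N, (1)%Z); (2%N, 5%N, (1)%Z); (3%N, 6%N, (-2)%Z)].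
Definition h_2ab (neg : bool) : seq (nat * nat * int) :=
  if neg then [:: (6%N, 0%N, (1)%Z)] else [:: (0%N, 6%N, (1)%Z)].

Definition ree_x (F : fieldType) (n : nat) (neg : bool) (t : F) : 'M[F]_7 :=
  let th := (3 ^ n)%N in
  root_elt (e_a neg) (h_a neg) (t ^+ th) *m
  root_elt (e_b neg) (h_b neg) t *m
  root_elt (e_ab neg) (h_ab neg) (- t ^+ th.+1) *m
  root_elt (e_2ab neg) (h_2ab neg) (t ^+ (th.*2).+1).

Definition ree_gens (F : finFieldType) (n : nat) : {set 'M[F]_7} :=
  [set ree_x n b t | b : bool, t : F].

(* The Ree group 2G2(3^(2n+1)), for F a field of order 3^(2n+1). *)
Definition Ree (F : finFieldType) (n : nat) : {group {'GL_7[F]}} :=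
  <<[set g : {'GL_7[F]} | GLval g \in ree_gens F n]>>%G.

Definition is_digraph (V : finType) (arc : rel V) : Prop :=
  (forall x, ~~ arc x x) /\ (forall x y, arc x y -> ~~ arc y x).

Definition sarc (V : finType) (arc : rel V) (s : nat) (p : seq V) : bool :=
  if p is x :: p' then (size p' == s) && path arc x p' else false.

Definition preserves_arcs (V : finType) (arc : rel V) (G : {set {perm V}}) :=
  forall g, g \in G -> forall x y, arc (g x) (g y) = arc x y.

Definition sarc_transitive (V : finType) (arc : rel V) (G : {set {perm V}})
  (s : nat) :=
  forall p1 p2, sarc arc s p1 -> sarc arc s p2 ->
    exists2 g, g \in G & map (fun x => g x) p1 = p2.

Definition cyclic_by_C6 (gT : finGroupType) (M : {set gT}) (k : nat) : Prop :=
  exists K H : {group gT},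
    [/\ (K ><| H)%g = M, cyclic K, #|K| = k, cyclic H & #|H| = 6%N].

(* Main.v *)
Require Import Defs.
From HB Require Import structures.
From mathcomp Require Import all_boot all_order all_algebra all_fingroup all_solvable all_field.
From mathcomp Require Import zify.
Set Implicit Arguments. Unset Strict Implicit. Unset Printing Implicit Defensive.
Local Open Scope group_scope.
Lemma Kprops (gT rT : finGroupType) (Y : {group gT}) (M : {group rT}) (k : nat) :
  coprime k 6 -> cyclic_by_C6 M k -> Y \isog M ->
  [/\ cyclic 'O_\pi(k)(Y), #|'O_\pi(k)(Y)| = k & \pi(k).-Hall(Y) 'O_\pi(k)(Y)].
Proof.
move=> ck [K [H [defM cK oK cH oH]]] iso.
have kpos : (0 < k)%N.
  by case: k ck oK => // _; rewrite /coprime gcd0n.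
have [nKM sHM _ _ _] := sdprod_context defM.


have iso' := iso.
have hallK : \pi(k).-Hall(M) K.
  rewrite /pHall (normal_sub nKM) /pgroup oK pnat_pi //=.
  by rewrite -(index_sdprod defM) oH -coprime_pi'.
have OK : 'O_\pi(k)(M) = K by apply: normal_Hall_pcore.
have isoO := isog_pcore \pi(k) iso'.
rewrite OK in isoO.
have oY : #|Y| = (k * 6)%N by rewrite (card_isog iso') -oK -oH /= (sdprod_card defM).
have oO : #|'O_\pi(k)(Y)| = k by rewrite (card_isog isoO).
split => //; first by rewrite (isog_cyclic isoO).
rewrite /pHall pcore_sub pcore_pgroup /=.
have := Lagrange (pcore_sub \pi(k) Y); rewrite oO oY => /eqP.
rewrite eqn_mul2l (negbTE (lt0n_neq0 kpos)) /= => /eqP ->.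
by rewrite -coprime_pi'.
Qed.
Local Close Scope group_scope.
Lemma three_pow n : (2 * n + 1 <= 3 ^ n.+1)%N.
Proof. elim: n => [|n IH] //; rewrite expnS; lia. Qed.

Lemma arith n (k : nat) : (1 <= n)%N ->
  (k = 3 ^ (2 * n + 1) - 3 ^ n.+1 + 1 \/ k = 3 ^ (2 * n + 1) + 3 ^ n.+1 + 1)%N ->
  coprime k 6 /\ (2 * n + 1 < k)%N.
Proof.
move=> n1 hk.
have h2 := three_pow n.
have ha : (3 ^ n.+1 = 3 * 3 ^ n)%N by rewrite expnS.
have hq : (3 ^ (2 * n + 1) = 3 * (3 ^ n * 3 ^ n))%N.
  by rewrite addn1 expnS mul2n -addnn expnD.
have a3 : (3 <= 3 ^ n)%N.
  by case: n n1 {hk h2 ha hq} => // n _; rewrite expnS; have := expn_gt0 3 n; lia.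
have oa : odd (3 ^ n) by rewrite oddX orbT.
have [c hc] : exists c, 3 ^ n = (2 * c + 1)%N.
  by exists (3 ^ n)./2; rewrite -[in LHS](odd_double_half (3 ^ n)) oa -mul2n addnC.
rewrite ha hq hc in hk h2.
have [X [Y [e1 e2 e3]]] : exists X Y, [/\ k = (2 * X + 1)%N, k = (Y * 3 + 1)%N & (2 * n + 1 < k)%N].
  have hb : ((2 * c + 1) * (2 * c + 1) = 4 * (c * c) + 4 * c + 1)%N by nia.
  rewrite hb in hk *.
  case: hk => ->.
    exists (6 * (c * c) + 3 * c)%N, (4 * (c * c) + 2 * c)%N; split; lia.
  exists (6 * (c * c) + 9 * c + 3)%N, (4 * (c * c) + 6 * c + 2)%N; split; lia.
split=> //.
rewrite -[6%N]/(2 * 3)%N coprimeMr coprimen2 coprime_sym prime_coprime // /dvdn.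
by rewrite {1}e1 {1}e2 oddD oddM /= modnMDl.
Qed.

Local Open Scope group_scope.

Lemma out_nb (V : finType) (arc : rel V) (G : {group {perm V}}) :
  [transitive G, on [set: V] | 'P] -> preserves_arcs arc G ->
  (exists x y, arc x y) -> forall z, exists y, arc z y.
Proof.
move=> trG pres [x [y axy]] z.
have : z \in orbit 'P G x by rewrite (atransP trG) ?inE.
case/imsetP=> a Ga ->; exists (a y); by rewrite /= pres.
Qed.

Lemma ext_path (V : finType) (arc : rel V) :
  (forall z, exists y, arc z y) -> forall j x, exists p, path arc x p && (size p == j).
Proof.
move=> nb; elim=> [|j IH] x; first by exists [::].
have [y axy] := nb x; have [p /andP[pp sp]] := IH y.
by exists (y :: p); rewrite /= axy pp.
Qed.

Lemma two_arc_trans (V : finType) (arc : rel V) (G : {group {perm V}}) s :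
  (2 <= s)%N -> sarc_transitive arc G s -> (forall z, exists y, arc z y) ->
  forall a b c a' b' c', arc a b -> arc b c -> arc a' b' -> arc b' c' ->
  exists2 g, g \in G & [/\ g a = a', g b = b' & g c = c'].
Proof.
move=> s2 str nb a b c a' b' c' ab bc ab' bc'.
have [p /andP[pp sp]] := ext_path nb (s - 2) c.
have [p' /andP[pp' sp']] := ext_path nb (s - 2) c'.
have [|| g Gg] := str (a :: b :: c :: p) (a' :: b' :: c' :: p').
- by rewrite /sarc /= ab bc pp (eqP sp) andbT; apply/eqP; lia.
- by rewrite /sarc /= ab' bc' pp' (eqP sp') andbT; apply/eqP; lia.
by move=> /= [e1 e2 e3 _]; exists g.
Qed.

Lemma core (V : finType) (arc : rel V) s (G L : {group {perm V}}) (v : V)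
  (M : {group {perm V}}) k m :
  L <| G -> (#|G : L| %| m)%N -> (0 < m)%N -> (m < k)%N -> coprime k 6 ->
  is_digraph arc -> (exists x y, arc x y) -> preserves_arcs arc G ->
  [primitive G, on [set: V] | 'P] -> (2 <= s)%N -> sarc_transitive arc G s ->
  maximal 'C_G[v | 'P] G -> cyclic_by_C6 M k ->
  ('C_G[v | 'P] :&: L) \isog M -> False.
Proof.
move=> nLG dm m0 mk ck dig ex pres prim s2 str maxv cM iso.
have trG : [transitive G, on [set: V] | 'P] by case/andP: prim.
have nb := out_nb trG pres ex.
have tarc := two_arc_trans s2 str nb.
have arc_tr : forall a b a' b', arc a b -> arc a' b' ->
    exists2 g, g \in G & g a = a' /\ g b = b'.
  move=> a b a' b' ab ab'; have [c bc] := nb b; have [c' bc'] := nb b'.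
  by have [g Gg [e1 e2 _]] := tarc _ _ _ _ _ _ ab bc ab' bc'; exists g.
have orbv : forall y, exists2 a : {perm V}, a \in G & y = a v.
  move=> y; have : y \in orbit 'P G v by rewrite (atransP trG) ?inE.
  by case/imsetP=> a Ga ->; exists a.
pose S x := 'C_G[x | 'P]%G.
pose Y x := (S x :&: L)%G.
pose pi := \pi(k).
pose K x := 'O_pi(Y x)%G.
have hS : forall (a : {perm V}) x, a \in G -> S (a x) :=: S x :^ a.
  by move=> a x Ga; rewrite /S /= conjIg conjGid // -astab1_act.
have hY : forall (a : {perm V}) x, a \in G -> Y (a x) :=: Y x :^ a.
  move=> a x Ga; rewrite /Y /= conjIg -hS //.
  by rewrite ((normsP (normal_norm nLG)) a Ga).
have hK : forall (a : {perm V}) x, a \in G -> K (a x) :=: K x :^ a.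
  move=> a x Ga; rewrite /K.
  have -> : Y (a x) = (Y x :^ a)%G by apply: val_inj; exact: hY.
  exact: pcoreJ.
have hiso : forall x, Y x \isog M.
  move=> x; have [a Ga ->] := orbv x.
  have -> : Y (a v) = (Y v :^ a)%G by apply: val_inj; exact: hY.
  by rewrite (isog_transl _ (isog_symr (conj_isog (Y v) a))).
have hKp x : [/\ cyclic (K x), #|K x| = k & pi.-Hall(Y x) (K x)].
  exact: Kprops ck cM (hiso x).
have hKn x : K x <| S x.
  exact: char_normal_trans (pcore_char _ _) (normalGI (subsetIl _ _) nLG).
have hKY x : K x \subset Y x by apply: pcore_sub.
have hKL x : K x \subset L by apply: subset_trans (hKY x) (subsetIr _ _).
have hKS x : K x \subset S x by apply: subset_trans (hKY x) (subsetIl _ _).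
have hsub x (P : {group {perm V}}) : P \subset Y x -> pi.-group P -> P \subset K x.
  move=> sPY piP; have [_ _ hall] := hKp x.
  by rewrite (sub_normal_Hall hall (pcore_normal _ _)).
have [w avw] := nb v.
have keyv : K v :&: S w = 1.
  have E1 : K v :&: S w = K v :&: K w.
    apply/eqP; rewrite eqEsubset andbC setIS ?hKS //= subsetI subsetIl /=.

    apply: hsub; last exact: pgroupS (subsetIl _ _) (pcore_pgroup _ _).
    by rewrite subsetI subsetIr (subset_trans (subsetIl _ _) (hKL v)).
  rewrite E1.
  pose E := (K v :&: K w)%G.
  have [cKv _ _] := hKp v; have [cKw _ _] := hKp w.
  have hnorm : S v \subset 'N(E).
    apply/subsetP => h Sh; apply/normP.
    have Gh : h \in G by case/setIP: Sh.
    have hv : h v = v by case/setIP: Sh => _ /astab1P.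
    have eK : K v :=: K v :^ h by rewrite -hK // hv.
    apply/eqP; rewrite (eq_subG_cyclic cKv) ?cardJg //=; last exact: subsetIl.
    by rewrite {2}eK conjSg subsetIl.
  have [x wx] := nb w; have [g Gg [gv gw]] := arc_tr v w w x avw wx.
  have gN : g \in 'N(E).
    apply/normP/eqP; rewrite (eq_subG_cyclic cKw) ?cardJg //=; last exact: subsetIr.
    have e1 : K (g v) = K w := f_equal K gv.
    by rewrite conjIg -!hK // e1 subsetIl.
  have gS : g \notin S v.
    apply/negP => /setIP[_ /astab1P]; rewrite /= /aperm gv => ewv.
    by case: dig => irr _; move: avw; rewrite ewv (negbTE (irr v)).
  have NG : G \subset 'N(E).
    case/maxgroupP: maxv => _ hmax.
    have sub : S v \subset 'N_G(E) by rewrite subsetI subsetIl hnorm.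
    have [eqN|prN] := eqVproper (subsetIl G 'N(E)).
      by rewrite -eqN subsetIr.
    have eqS := hmax _ prN sub.
    by move: gS; rewrite -eqS inE Gg gN.
  have Efix : forall y, E \subset S y.
    move=> y; have [a Ga ->] := orbv y.
    have aN : a \in 'N(E) := subsetP NG a Ga.
    rewrite hS // -(normP aN) conjSg.
    exact: subset_trans (subsetIl _ _) (hKS v).
  apply/trivgP/subsetP => e Ee; rewrite inE; apply/eqP/permP => y.
  rewrite perm1; have := subsetP (Efix y) e Ee.
  by case/setIP => _ /astab1P.
have key : forall a b, arc a b -> K a :&: S b = 1.
  move=> a b ab; have [g Gg [<- <-]] := arc_tr v w a b avw ab.
  by rewrite hK // hS // -conjIg keyv conjs1g.
have [x wx] := nb w.
pose T := 'C_(S v)[w | 'P]%G.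
pose Tx := 'C_T[x | 'P]%G.
pose T' := 'C_(S w)[x | 'P]%G.
have TSw : T \subset S w.
  by rewrite subsetI (subset_trans (subsetIl _ _) (subsetIl _ _)) subsetIr.
have orbeq : orbit 'P T x = orbit 'P (S w) x.
  apply/eqP; rewrite eqEsubset imsetS //=.
  apply/subsetP => y /imsetP[h Sh ->].
  have Gh : h \in G by case/setIP: Sh.
  have hw : h w = w by case/setIP: Sh => _ /astab1P.
  have ahx : arc w (h x) by rewrite -{1}hw pres.
  have [g Gg [gv gw gx]] := tarc v w x v w (h x) avw wx avw ahx.
  apply/imsetP; exists g => //=.
  apply/setIP; split; first (apply/setIP; split => //).
    by apply/astab1P; rewrite /= /aperm gv.
  by apply/astab1P; rewrite /= /aperm gw.
have idxeq : #|T : Tx| = #|S w : T'| by rewrite -!card_orbit orbeq.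
have [_ oK _] := hKp v.
have divS (a : V) (H : {group {perm V}}) : H \subset S a -> K a :&: H = 1 ->
    (k * #|H| %| #|S a|)%N.
  move=> sHS tKH.
  have nKH : H \subset 'N(K a) := subset_trans sHS (normal_norm (hKn a)).
  have [_ oKa _] := hKp a.
  rewrite -oKa -(TI_cardMg tKH) -(norm_joinEr nKH).
  by apply: cardSg; rewrite join_subG hKS.
have kidx : (k %| #|S w : T'|)%N.
  have tKT : K w :&: T' = 1.
    apply/trivgP; rewrite -(key w x wx) setIS //.
    by rewrite subsetI (subset_trans (subsetIl _ _) (subsetIl _ _)) subsetIr.
  have := divS w T' (subsetIl _ _) tKT.
  by rewrite -(Lagrange (subsetIl (S w) 'C[x | 'P])) [(k * _)%N]mulnC dvdn_pmul2l ?cardG_gt0.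
have kT : (k %| #|T|)%N.
  rewrite -(Lagrange (subsetIl T 'C[x | 'P])) -/Tx idxeq.
  exact: dvdn_mull.
have kkS : (k * k %| #|S v|)%N.
  have tKT : K v :&: T = 1.
    by apply/trivgP; rewrite -keyv setIS.
  exact: dvdn_trans (dvdn_mul (dvdnn k) kT) (divS v T (subsetIl _ _) tKT).
have oY : #|Y v| = (k * 6)%N.
  case: cM => K0 [H0 [defM _ oK0 _ oH0]].
  by rewrite (card_isog (hiso v)) -(sdprod_card defM) oK0 oH0.
have iL : (#|S v : Y v| %| m)%N.
  apply: dvdn_trans dm.
  have nL : G \subset 'N(L) := normal_norm nLG.
  rewrite /Y /= indexgI -card_quotient; last exact: subset_trans (subsetIl _ _) nL.
  by rewrite -card_quotient // cardSg // quotientS // subsetIl.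
have k0 : (0 < k)%N by apply: leq_ltn_trans mk.
move: kkS; rewrite -(Lagrange (subsetIl (S v) L)) -/(Y v) oY -mulnA dvdn_pmul2l //.
rewrite Gauss_dvdr // => kd.
have := dvdn_leq m0 (dvdn_trans kd iL).
by rewrite leqNgt mk.
Qed.

Local Close Scope group_scope.

Theorem lemma3p4
  (n : nat) (F : finFieldType) (V : finType) (arc : rel V) (s : nat)
  (G L : {group {perm V}}) (v : V) :
  (1 <= n)%N ->
  #|F| = (3 ^ (2 * n + 1))%N ->
  (* L = 2G2(q), G = L:m <= Aut(L) with m | 2n+1 *)
  (L <| G)%g ->
  L \isog Ree F n ->
  ('C_G(L) = 1)%g ->
  (#|G : L|%g %| 2 * n + 1)%N ->
  (* Gamma is a digraph with at least one arc, G <= Aut(Gamma) *)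
  is_digraph arc ->
  (exists x y, arc x y) ->
  preserves_arcs arc G ->
  (* G primitive on vertices and transitive on s-arcs, s >= 2 *)
  [primitive G, on [set: V] | 'P] ->
  (2 <= s)%N ->
  sarc_transitive arc G s ->
  (* G_v is a maximal subgroup of G not containing L *)
  maximal 'C_G[v | 'P]%g G ->
  ~~ (L \subset 'C_G[v | 'P])%g ->
  let q := (3 ^ (2 * n + 1))%N in
  let r := (3 ^ n.+1)%N in (* r = sqrt(3q) *)
  ~ (exists M : {group {perm V}},
       [/\ maximal M L, cyclic_by_C6 M (q - r + 1) & (('C_G[v | 'P] :&: L)%g \isog M)])
  /\
  ~ (exists M : {group {perm V}},
       [/\ maximal M L, cyclic_by_C6 M (q + r + 1) & (('C_G[v | 'P] :&: L)%g \isog M)]).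
Proof.
move=> n1 _ nLG _ _ dm dig ex pres prim s2 str maxv _ q r.
have m0 : (0 < 2 * n + 1)%N by rewrite addn1.
have [c1 l1] := @arith n (q - r + 1) n1 (or_introl erefl).
have [c2 l2] := @arith n (q + r + 1) n1 (or_intror erefl).
split; case=> M [_ cM iso].
  exact: (core nLG dm m0 l1 c1 dig ex pres prim s2 str maxv cM iso).
exact: (core nLG dm m0 l2 c2 dig ex pres prim s2 str maxv cM iso).
Qed.
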